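(* Let $\phi:\mathbb{R}^n\to\mathbb{R}$ satisfy Assumption A and let $0<\gamma L_\phi<2$. Then the discrete-time system with input $e\in\mathbb{R}^n$ $$\tilde u^+=\tilde u-\gamma(\nabla\phi(\tilde u)+e)$$ is ISS with respect to $\mathcal{A}_d=\{u^\star\}$.
   Context: Assumption A: $\phi$ is continuously differentiable and there exist $L_\phi>0$, $u^\star\in\mathbb{R}^n$ and class-$\mathcal{K}_\infty$ functions $\mu_1,\mu_2$ such that $\nabla\phi(u)=0$ iff $u=u^\star$, and for all $u,\tilde u\in\mathbb{R}^n$: $\mu_1(\|u-u^\star\|)\le\phi(u)-\phi(u^\star)$, $\mu_2(\phi(u)-\phi(u^\star))\le\|\nabla\phi(u)\|$, and $\|\nabla\phi(u)-\nabla\phi(\tilde u)\|\le L_\phi\|u-\tilde u\|$. ISS: the system $x^+=G_d(x,e)$ is ISS with respect to a compact set $\mathcal{A}_d$ if there exist $\beta\in\mathcal{KL}$, $\alpha\in\mathcal{K}_\infty$ such that for every bounded input sequence $e$ every solution satisfies $|x(j)|_{\mathcal{A}_d}\le\beta(|x(0)|_{\mathcal{A}_d},j)+\alpha(\sup_k\|e(k)\|)$ for all $j\in\mathbb{N}$. *)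

(* Defs.v *)
From HB Require Import structures.
From mathcomp Require Import all_boot all_order all_algebra.
From mathcomp Require Import all_classical all_reals all_analysis.
Set Implicit Arguments. Unset Strict Implicit. Unset Printing Implicit Defensive.
Import Order.TTheory GRing.Theory Num.Theory.
Import numFieldNormedType.Exports.
Local Open Scope classical_set_scope.
Local Open Scope ring_scope.

Definition dotv {R : realType} {n : nat} (u v : 'rV[R]_n) : R :=
  \sum_(i < n) u 0 i * v 0 i.
Definition enorm {R : realType} {n : nat} (u : 'rV[R]_n) : R :=
  Num.sqrt (dotv u u).

Definition is_gradient {R : realType} {n : nat}
  (phi : 'rV[R]_n -> R) (g : 'rV[R]_n -> 'rV[R]_n) : Prop :=
  forall u, differentiable phi u /\ forall h, 'd phi u h = dotv (g u) h.

Definition classK {R : realType} (a : R -> R) : Prop :=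
  a 0 = 0 /\
  {within [set x : R | 0 <= x], continuous a} /\
  (forall s t : R, 0 <= s -> s < t -> a s < a t).

Definition classKinf {R : realType} (a : R -> R) : Prop :=
  classK a /\ (forall M : R, exists s : R, 0 <= s /\ M < a s).

Definition classKL {R : realType} (b : R -> nat -> R) : Prop :=
  (forall j : nat, classK (fun s => b s j)) /\
  (forall s : R, 0 <= s ->
     (forall j k : nat, (j <= k)%N -> b s k <= b s j) /\
     (fun j => b s j) @ \oo --> (0 : R)).

Definition AssumptionA {R : realType} {n : nat}
  (phi : 'rV[R]_n -> R) (g : 'rV[R]_n -> 'rV[R]_n)
  (L : R) (ustar : 'rV[R]_n) (mu1 mu2 : R -> R) : Prop :=
  is_gradient phi g /\ continuous g /\
  0 < L /\ classKinf mu1 /\ classKinf mu2 /\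
  (forall u, g u = 0 <-> u = ustar) /\
  (forall u, mu1 (enorm (u - ustar)) <= phi u - phi ustar) /\
  (forall u, mu2 (phi u - phi ustar) <= enorm (g u)) /\
  (forall u v, enorm (g u - g v) <= L * enorm (u - v)).

Definition dist_set {R : realType} {n : nat} (A : set 'rV[R]_n) (x : 'rV[R]_n) : R :=
  inf [set enorm (x - a) | a in A].

Definition ISS {R : realType} {n m : nat}
  (G : 'rV[R]_n -> 'rV[R]_m -> 'rV[R]_n) (A : set 'rV[R]_n) : Prop :=
  exists (beta : R -> nat -> R) (alpha : R -> R),
    classKL beta /\ classKinf alpha /\
    forall (e : nat -> 'rV[R]_m) (x : nat -> 'rV[R]_n),
      has_ubound (range (fun k => enorm (e k))) ->
      (forall j, x j.+1 = G (x j) (e j)) ->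
      forall j : nat,
        dist_set A (x j) <=
          beta (dist_set A (x 0%N)) j + alpha (sup (range (fun k => enorm (e k)))).

(* Main.v *)
Require Import Defs.
From HB Require Import structures.
From mathcomp Require Import all_boot all_order all_algebra.
From mathcomp Require Import all_classical all_reals all_analysis.
From mathcomp Require Import ring lra.
Import Order.TTheory GRing.Theory Num.Theory.
Import numFieldNormedType.Exports.
Local Open Scope classical_set_scope.
Local Open Scope ring_scope.
Set Implicit Arguments. Unset Strict Implicit.
Section K.
Variable R : realType.
Definition EDC (f : R -> R) := forall x, 0 <= x -> forall eps, 0 < eps ->
  exists2 d, 0 < d & forall y, 0 <= y -> `|y - x| < d -> `|f y - f x| < eps.

Lemma EDC_within (f : R -> R) : EDC f -> {within [set x | 0 <= x], continuous f}.
Proof.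
move=> Hf; apply/subspace_continuousP => x /= x0.
apply/cvgrPdist_lt => e e0; rewrite near_withinE.
have [d d0 Hd] := Hf x x0 e e0.
exists d => //= y /= xy y0.
by rewrite distrC; apply: Hd => //; rewrite distrC.
Qed.

Lemma within_EDC (f : R -> R) : {within [set x | 0 <= x], continuous f} -> EDC f.
Proof.
move=> /subspace_continuousP Hf x x0 e e0.
have := Hf x x0; move/cvgrPdist_lt/(_ e e0); rewrite near_withinE.
case=> d /= d0 Hd; exists d => // y y0 xy.
by rewrite distrC; apply: Hd => //=; rewrite distrC.
Qed.
Definition KI (f : R -> R) := [/\ f 0 = 0, (forall s t, 0 <= s -> s < t -> f s < f t),
  EDC f & (forall M, exists2 s, 0 <= s & M < f s)].

Lemma KI_ge0 f x : KI f -> 0 <= x -> 0 <= f x.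
Proof.
case=> f0 fi _ _; rewrite le_eqVlt => /predU1P[<-|x0]; first by rewrite f0.
by rewrite -f0 ltW // fi.
Qed.

Lemma KI_le f s t : KI f -> 0 <= s -> s <= t -> f s <= f t.
Proof.
move=> [_ fi _ _] s0; rewrite le_eqVlt => /predU1P[->//|st].
exact/ltW/fi.
Qed.

Lemma KI_leP f s t : KI f -> 0 <= s -> 0 <= t -> (f s <= f t) = (s <= t).
Proof.
move=> Kf s0 t0; apply/idP/idP; last exact: KI_le.
case: Kf => _ fi _ _.
by apply: contraTT; rewrite -!ltNge => ts; apply: fi.
Qed.

Lemma KI_classKinf f : KI f -> classKinf f.
Proof.
move=> Kf; case: (Kf) => f0 fi fc fu; split.
  split; first exact: f0.
  by split; [exact: EDC_within | exact: fi].
move=> M; have [s s0 Ms] := fu M; by exists s.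
Qed.

Lemma classKinf_KI f : classKinf f -> KI f.
Proof.
case=> [[f0 [fc fi]] fu]; split => //; first exact: within_EDC.
by move=> M; have [s [s0 Ms]] := fu M; exists s.
Qed.

Lemma EDC_comp f g : EDC f -> EDC g -> (forall x, 0 <= x -> 0 <= g x) ->
  EDC (fun x => f (g x)).
Proof.
move=> Hf Hg gp x x0 e e0.
have [d1 d10 H1] := Hf (g x) (gp x x0) e e0.
have [d2 d20 H2] := Hg x x0 d1 d10.
by exists d2 => // y y0 yx; apply: H1; [exact: gp| exact: H2].
Qed.

Lemma EDC_add f g : EDC f -> EDC g -> EDC (fun x => f x + g x).
Proof.
move=> Hf Hg x x0 e e0.
have e20 : 0 < e / 2 by rewrite divr_gt0.
have [d1 d10 H1] := Hf x x0 _ e20.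
have [d2 d20 H2] := Hg x x0 _ e20.
exists (Num.min d1 d2); first by rewrite lt_min d10 d20.
move=> y y0; rewrite lt_min => /andP[y1 y2].
rewrite (_ : _ - _ = (f y - f x) + (g y - g x)); last by rewrite opprD !addrA; congr (_ + _); rewrite addrAC.
rewrite (splitr e); apply: (le_lt_trans (ler_normD _ _)).
by rewrite ltrD // ?H1 ?H2.
Qed.

Lemma EDC_scale k f : 0 < k -> EDC f -> EDC (fun x => k * f x).
Proof.
move=> k0 Hf x x0 e e0.
have [d d0 H] := Hf x x0 (e / k) (divr_gt0 e0 k0).
exists d => // y y0 yx; rewrite -mulrBr normrM gtr0_norm //.
by rewrite -ltr_pdivlMl // mulrC; apply: H.
Qed.

Lemma EDC_sq : EDC (fun x : R => x * x).
Proof.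
move=> x x0 e e0.
have k0 : 0 < 2 * x + 1 by rewrite ltr_wpDl // mulr_ge0.
exists (Num.min 1 (e / (2 * x + 1))); first by rewrite lt_min ltr01 divr_gt0.
move=> y y0; rewrite lt_min => /andP[y1 y2].
have -> : y * y - x * x = (y - x) * (y + x) by ring.
rewrite normrM.
have h2 : `|y + x| < 2 * x + 1.
  have -> : y + x = (y - x) + 2 * x by ring.
  apply: (le_lt_trans (ler_normD _ _)).
  rewrite [`|2 * x|]ger0_norm ?mulr_ge0 //.
  by rewrite addrC ltrD2l.
have := ltr_pM (normr_ge0 _) (normr_ge0 _) y2 h2.
by rewrite divfK ?gt_eqF.
Qed.

Lemma KI_comp f g : KI f -> KI g -> KI (fun x => f (g x)).
Proof.
move=> Kf Kg; case: (Kf) => f0 fi fc fu; case: (Kg) => g0 gi gc gu; split.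
- by rewrite g0 f0.
- by move=> s t s0 st; apply: fi; [exact: KI_ge0|exact: gi].
- by apply: EDC_comp => // x x0; exact: KI_ge0.
- move=> M; have [s s0 Ms] := fu M; have [t t0 st] := gu s.
  exists t => //; apply: lt_le_trans Ms _; apply: KI_le => //; exact: ltW.
Qed.

Lemma KI_add f g : KI f -> KI g -> KI (fun x => f x + g x).
Proof.
move=> Kf Kg; case: (Kf) => f0 fi fc fu; case: (Kg) => g0 gi gc gu; split.
- by rewrite g0 f0 addr0.
- by move=> s t s0 st; apply: ltrD; [exact: fi|exact: gi].
- exact: EDC_add.
- move=> M; have [s s0 Ms] := fu M; exists s => //.
  by rewrite ltr_wpDr // KI_ge0.
Qed.

Lemma KI_scale k f : 0 < k -> KI f -> KI (fun x => k * f x).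
Proof.
move=> k0 Kf; case: (Kf) => f0 fi fc fu; split.
- by rewrite f0 mulr0.
- by move=> s t s0 st; rewrite ltr_pM2l // fi.
- exact: EDC_scale.
- move=> M; have [s s0 Ms] := fu (M / k); exists s => //.
  by rewrite -ltr_pdivrMl // mulrC.
Qed.

Lemma KI_sq : KI (fun x : R => x * x).
Proof.
split.
- by rewrite mulr0.
- by move=> s t s0 st; apply: ltr_pM.
- exact: EDC_sq.
- move=> M; exists (Num.max M 0 + 1).
    by rewrite addr_ge0 // le_max lexx orbT.
  have h : M < Num.max M 0 + 1 by rewrite ltr_pwDr // le_max lexx.
  apply: (lt_le_trans h); rewrite -[X in X <= _]mul1r ler_pM2r.
    by rewrite lerDr le_max lexx orbT.
  by rewrite ltr_pwDr // le_max lexx orbT.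
Qed.

Lemma KI_surj f y : KI f -> 0 <= y -> exists x, 0 <= x /\ f x = y.
Proof.
move=> Kf y0; case: (Kf) => f0 fi fc fu.
have [s s0 ys] := fu y.
have cs : {within `[0, s], continuous f}.
  have := EDC_within fc; apply: continuous_subspaceW.
  by move=> z /=; rewrite in_itv /= => /andP[].
have [|c cin fc'] := @IVT R f 0 s y s0 cs.
  by apply/andP; split; [rewrite ge_min f0 y0 | rewrite le_max (ltW ys) orbT].
exists c; split => //; by move: cin; rewrite in_itv /= => /andP[].
Qed.

Definition Kinv (f : R -> R) (y : R) : R :=
  match pselect (exists x, 0 <= x /\ f x = y) with
  | left P => projT1 (cid P)
  | right _ => 0
  end.

Lemma Kinv_spec f y : KI f -> 0 <= y -> 0 <= Kinv f y /\ f (Kinv f y) = y.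
Proof.
move=> Kf y0; rewrite /Kinv; case: pselect => [P|]; last by move=> /(_ (KI_surj Kf y0)).
by case: (cid P).
Qed.

Lemma Kinv_f f x : KI f -> 0 <= x -> Kinv f (f x) = x.
Proof.
move=> Kf x0; have [h0 hf] := Kinv_spec Kf (KI_ge0 Kf x0).
apply/eqP; rewrite eq_le; apply/andP; split; rewrite -(KI_leP Kf) ?hf //.
Qed.

Lemma KI_Kinv f : KI f -> KI (Kinv f).
Proof.
move=> Kf; case: (Kf) => f0 fi fc fu.
have hp y : 0 <= y -> 0 <= Kinv f y by move=> y0; case: (Kinv_spec Kf y0).
have hf y : 0 <= y -> f (Kinv f y) = y by move=> y0; case: (Kinv_spec Kf y0).
have mono s t : 0 <= s -> 0 <= t -> (Kinv f s <= Kinv f t) = (s <= t).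
  by move=> s0 t0; rewrite -(KI_leP Kf (hp s s0) (hp t t0)) !hf.
split.
- by rewrite -{1}f0 Kinv_f.
- by move=> s t s0 st; rewrite ltNge mono ?(le_trans s0 (ltW st)) // -ltNge.
- move=> y0 y00 e e0; set x0 := Kinv f y0.
  have x00 : 0 <= x0 by exact: hp.
  have d1p : 0 < f (x0 + e) - y0.
    by rewrite subr_gt0 -{1}(hf y0 y00) fi // ltrDl.
  have up y : 0 <= y -> y < f (x0 + e) -> Kinv f y < x0 + e.
    move=> y0' yl; rewrite ltNge; apply/negP => H.
    have := KI_le Kf (addr_ge0 x00 (ltW e0)) H; rewrite hf //.
    by move=> H'; have := lt_le_trans yl H'; rewrite ltxx.
  case: (ltP x0 e) => xe.
  + exists (f (x0 + e) - y0) => // y y0' yy.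
    rewrite ltr_norml; apply/andP; split.
      by rewrite ltrBrDl; apply: lt_le_trans (hp y y0'); rewrite subr_lt0.
    rewrite ltrBlDl; apply: up => //.
    by have := ltr_distlDr yy; rewrite addrC subrK.
  + have d2p : 0 < y0 - f (x0 - e).
      rewrite subr_gt0 -[X in _ < X](hf y0 y00) fi ?subr_ge0 //.
      by rewrite ltrBlDr ltrDl.
    exists (Num.min (f (x0 + e) - y0) (y0 - f (x0 - e))).
      by rewrite lt_min d1p d2p.
    move=> y y0'; rewrite lt_min => /andP[yy1 yy2].
    rewrite ltr_norml; apply/andP; split; last first.
      rewrite ltrBlDl; apply: up => //.
      by have := ltr_distlDr yy1; rewrite addrC subrK.
    have hy : f (x0 - e) < y.
      by have := ltr_distlCBl yy2 => h; lra.
    suff: x0 - e < Kinv f y by move=> h; lra.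
    rewrite ltNge; apply/negP => H.
    have := KI_le Kf (hp y y0') H; rewrite hf // => H'.
    by have := lt_le_trans hy H'; rewrite ltxx.
- move=> M; exists (f (Num.max M 0 + 1)).
    by apply: KI_ge0 => //; rewrite addr_ge0 // le_max lexx orbT.
  rewrite Kinv_f //; last by rewrite addr_ge0 // le_max lexx orbT.
  by rewrite ltr_pwDr // le_max lexx.
Qed.
End K.

Unset Implicit Arguments. Set Strict Implicit.

Section Dot.
Variables (R : realType) (n : nat).
Implicit Types (u v w : 'rV[R]_n).
Local Notation N u := (dotv u u).

Lemma dotvC u v : dotv u v = dotv v u.
Proof. by apply: eq_bigr => i _; rewrite mulrC. Qed.

Lemma dotvDl u w v : dotv (u + w) v = dotv u v + dotv w v.
Proof. by rewrite /dotv -big_split; apply: eq_bigr => i _; rewrite mxE mulrDl. Qed.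

Lemma dotvZl k u v : dotv (k *: u) v = k * dotv u v.
Proof. by rewrite /dotv mulr_sumr; apply: eq_bigr => i _; rewrite mxE mulrA. Qed.

Lemma dotvNl u v : dotv (- u) v = - dotv u v.
Proof. by rewrite -scaleN1r dotvZl mulN1r. Qed.

Lemma dotvBl u w v : dotv (u - w) v = dotv u v - dotv w v.
Proof. by rewrite dotvDl dotvNl. Qed.

Lemma dotvDr u w v : dotv v (u + w) = dotv v u + dotv v w.
Proof. by rewrite dotvC dotvDl !(dotvC v). Qed.

Lemma dotvZr k u v : dotv v (k *: u) = k * dotv v u.
Proof. by rewrite dotvC dotvZl dotvC. Qed.

Lemma dotvBr u w v : dotv v (u - w) = dotv v u - dotv v w.
Proof. by rewrite dotvC dotvBl !(dotvC v). Qed.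

Lemma dotv_ge0 u : 0 <= N u.
Proof. by apply: sumr_ge0 => i _; rewrite -expr2 sqr_ge0. Qed.

Lemma enorm_ge0 u : 0 <= enorm u.
Proof. exact: sqrtr_ge0. Qed.

Lemma enorm_sq u : enorm u * enorm u = N u.
Proof. by rewrite -expr2 sqr_sqrtr // dotv_ge0. Qed.

Lemma young u v l : 0 < l -> 2 * dotv u v <= l * N u + N v / l.
Proof.
move=> l0; have := dotv_ge0 (l *: u - v).
rewrite dotvBl !dotvBr !dotvZl !dotvZr (dotvC v u) => h.
rewrite -(ler_pM2l l0) mulrDr [l * (N v / l)]mulrCA divff ?gt_eqF // mulr1; lra.
Qed.

Lemma le_sq (a b : R) : 0 <= a -> a <= b -> a * a <= b * b.
Proof. by move=> a0 ab; apply: ler_pM. Qed.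

Lemma enorm_le_sq u v (L : R) : 0 <= L -> enorm u <= L * enorm v -> N u <= L * L * N v.
Proof.
move=> L0 h; rewrite -!enorm_sq; have := @le_sq _ _ (enorm_ge0 u) h.
by rewrite mulrACA.
Qed.

Lemma dotv_lip u v (L t : R) : 0 < L -> 0 < t -> N u <= (L * t) * (L * t) * N v ->
  dotv u v <= L * t * N v.
Proof.
move=> L0 t0 h; have lt0 : 0 < L * t by rewrite mulr_gt0.
have ilt0 : 0 < (L * t)^-1 by rewrite invr_gt0.
have := @young u v _ ilt0.
rewrite invrK; move=> hy.
have : (L * t)^-1 * N u <= L * t * N v.
  rewrite -(ler_pM2l lt0) mulrA divff ?gt_eqF // mul1r.
  by rewrite mulrA.
lra.
Qed.

Lemma enormZ (t : R) u : 0 <= t -> enorm (t *: u) = t * enorm u.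
Proof.
move=> t0; rewrite /enorm dotvZl dotvZr mulrA sqrtrM ?mulr_ge0 //.
by rewrite -expr2 sqrtr_sqr ger0_norm.
Qed.

Lemma descent (phi : 'rV[R]_n -> R) (g : 'rV[R]_n -> 'rV[R]_n) (L : R) u v :
  is_gradient phi g -> 0 < L ->
  (forall x y, enorm (g x - g y) <= L * enorm (x - y)) ->
  phi (u + v) <= phi u + dotv (g u) v + L / 2 * N v.
Proof.
move=> Hg L0 Lip.
pose F := fun t : R => phi (u + t *: v).
have dF (t : R) : is_derive t 1 F (dotv (g (u + t *: v)) v).
  have E : (fun h : R => h^-1 *: ((F \o shift t) (h *: 1) - F t)) =
    (fun h : R => h^-1 *: ((phi \o shift (u + t *: v)) (h *: v) - phi (u + t *: v))).
    apply/funext => h /=; rewrite /F /=; congr (_ *: (phi _ - _)).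
    by rewrite /shift /= scalerDl [h%:A]mulr1 addrCA.
  have [dphi gphi] := Hg (u + t *: v).
  apply: DeriveDef.
    have := @diff_derivable _ _ _ phi (u + t *: v) v dphi.
    by rewrite /derivable -E.
  by rewrite /derive E -gphi -deriveE.
set D0 := dotv (g u) v.
set K2 := L / 2 * N v.
pose P := D0 \*: (@id R) + K2 \*: ((@id R) * (@id R)).
have dh (t : R) : is_derive t 1 (F - P)
    (dotv (g (u + t *: v)) v - (D0 *: 1 + K2 *: (id t *: 1 + id t *: 1))).
  apply: is_deriveB.

have dh' (t : R) : derivable (F - P) t 1 := @ex_derive _ _ _ _ _ _ _ (dh t).
have cont : {within `[0, 1], continuous (F - P)}.
  apply: continuous_subspaceT => t.
  exact/differentiable_continuous/derivable1_diffP/dh'.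
have neg : forall t : R, t \in `]0, 1[ -> derive1 (F - P) t <= 0.
  move=> t; rewrite in_itv /= => /andP[t0 t1].
  rewrite derive1E (@derive_val _ _ _ _ _ _ _ (dh t)).
  have -> : K2 *: (t%:A + t%:A) = K2 * (t + t) by rewrite [t%:A]mulr1.
  have hl : dotv (g (u + t *: v) - g u) v <= L * t * N v.
    apply: dotv_lip => //.
    apply: (le_trans (enorm_le_sq _ _ _ (ltW L0) (Lip _ _))).
    rewrite (_ : u + t *: v - u = t *: v); last by rewrite addrC addKr.
    rewrite dotvZl dotvZr.
    have -> : L * t * (L * t) * N v = L * L * (t * (t * N v)) by ring.
    exact: lexx.
  rewrite dotvBl in hl; rewrite [D0%:A]mulr1 /K2 /D0; lra.
have := @ler0_derive1_le_cc R (F - P) 0 1 (fun t _ => dh' t) neg cont 1 0.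
rewrite !in_itv /= ler01 !lexx => /(_ isT isT isT).
move=> H.
have : phi (u + 1 *: v) - (D0 * 1 + K2 * (1 * 1)) <= phi (u + 0 *: v) - (D0 * 0 + K2 * (0 * 0)) by exact: H.
rewrite scale1r scale0r addr0 !mulr0 !mulr1 addr0 subr0; lra.
Qed.
End Dot.

Section Comp.
Variable R : realType.

Lemma compare (rho : R -> R) (y : nat -> R) (W : R) (j : nat) :
  KI rho -> 0 <= W -> (forall k, 0 <= y k) ->
  (forall k, y k.+1 <= y k - rho (y k) + W) ->
  y j <= Kinv rho ((2 / (j.+1)%:R) * y 0%N) + (1 / (j.+1)%:R) * y 0%N
         + (Kinv rho (2 * W) + W).
Proof.
move=> Kr W0 y0 Hy.
set s := y 0%N.
have jp : 0 < (j.+1)%:R :> R by rewrite ltr0n.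
have s0 : 0 <= s := y0 0%N.
have a0 : 0 <= 2 / (j.+1)%:R * s by rewrite mulr_ge0 // divr_ge0 // ltW.
set tau := Kinv rho (2 / (j.+1)%:R * s).
have [tau0 rt] : 0 <= tau /\ rho tau = 2 / (j.+1)%:R * s := Kinv_spec Kr a0.
have [iw0 riw] : 0 <= Kinv rho (2 * W) /\ rho (Kinv rho (2 * W)) = 2 * W.
  by apply: Kinv_spec; [exact: Kr | rewrite mulr_ge0].
set b := Kinv rho (2 * W) + W.
have key y' : 0 <= y' -> Kinv rho (2 * W) <= y' -> 2 * W <= rho y'.
  by move=> y'0 h; rewrite -riw; apply: KI_le.
have inv k : y k <= b \/ y k <= tau \/ y k <= s - k%:R * (rho tau / 2).
  elim: k => [|k IH]; first by right; right; rewrite mul0r subr0.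
  have ste := Hy k; have rk := KI_ge0 Kr (y0 k).
  case: (leP (Kinv rho (2 * W)) (y k)) => Hk; last first.
    by left; rewrite /b; lra.
  have h2 := key _ (y0 k) Hk.
  case: IH => [a|[a|a]].
  - by left; lra.
  - by right; left; lra.
  - case: (leP (y k) tau) => yt; first by right; left; lra.
    have rr : rho tau <= rho (y k) by apply: KI_le => //; exact: ltW.
    right; right; rewrite -natr1; lra.
have jnz : (j.+1)%:R != 0 :> R by rewrite gt_eqF.
have e3 : s - j%:R * (rho tau / 2) = 1 / (j.+1)%:R * s.
  have jnz' : j%:R + 1 != 0 :> R by rewrite natr1.
  by rewrite rt -natr1; field.
have c0 : 0 <= 1 / (j.+1)%:R * s by rewrite mulr_ge0 // divr_ge0 // ltW.
have b0 : 0 <= b by rewrite /b addr_ge0.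
case: (inv j) => [a|[a|a]]; rewrite -/tau; clearbody tau b s;
  move: c0 e3 a; move: (1 / (j.+1)%:R * s) (j%:R) => c jr *; lra.
Qed.
End Comp.

Lemma step_alg (R : realType) (ga L A B C P0 P1 c k Kc : R) :
  0 < ga -> ga * L < 2 ->
  c = ga * (1 - ga * L / 2) -> k = ga * L * ga - ga ->
  Kc = k * k / (2 * c) + ga * L * ga / 2 ->
  P1 <= P0 + - (ga * (A + B)) + L / 2 * (ga * (ga * (A + (B + B) + C))) ->
  2 * (k * B) <= c * A + k * k * C / c ->
  P1 <= P0 - c / 2 * A + Kc * C.
Proof.
move=> g0 gL hc hk hK h1 h2.
have E : P0 + - (ga * (A + B)) + L / 2 * (ga * (ga * (A + (B + B) + C))) +
  (c * A + k * k * C / c - 2 * (k * B)) / 2 = P0 - c / 2 * A + Kc * C.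
  rewrite hK hk hc; field.
  by apply/andP; split; [rewrite subr_eq0 gt_eqF | rewrite gt_eqF].
move: E h2; move: (k * k * C / c) => T E h2.
lra.
Qed.

Set Implicit Arguments. Unset Strict Implicit.

Lemma Kinv_ge0 (R : realType) (f : R -> R) y : KI f -> 0 <= y -> 0 <= Kinv f y.
Proof. by move=> Kf y0; case: (Kinv_spec Kf y0). Qed.

Lemma Kinv_le (R : realType) (f : R -> R) x y : KI f -> 0 <= x -> x <= y -> Kinv f x <= Kinv f y.
Proof. by move=> Kf x0 xy; apply: KI_le (KI_Kinv Kf) x0 xy. Qed.

Lemma Kinv_lt (R : realType) (f : R -> R) x y : KI f -> 0 <= y -> 0 <= x -> y < f x -> Kinv f y < x.
Proof.
move=> Kf y0 x0 yx; rewrite ltNge; apply/negP => H.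
have := KI_le Kf x0 H; rewrite (Kinv_spec Kf y0).2 => H'.
by have := lt_le_trans yx H'; rewrite ltxx.
Qed.

Lemma Kinv_sum (R : realType) (f : R -> R) a b : KI f -> 0 <= a -> 0 <= b ->
  Kinv f (a + b) <= Kinv f (2 * a) + Kinv f (2 * b).
Proof.
move=> Kf a0 b0.
have h2a : 0 <= Kinv f (2 * a) by apply: Kinv_ge0 => //; rewrite mulr_ge0.
have h2b : 0 <= Kinv f (2 * b) by apply: Kinv_ge0 => //; rewrite mulr_ge0.
case: (leP a b) => ab.
  have hab : a + b <= 2 * b by lra.
  by apply: (le_trans (Kinv_le Kf (addr_ge0 a0 b0) hab)); lra.
have hab : a + b <= 2 * a by lra.
by apply: (le_trans (Kinv_le Kf (addr_ge0 a0 b0) hab)); lra.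
Qed.

Lemma frac_le (R : realType) (b a : R) (j k : nat) : 0 <= b -> 0 <= a -> (j <= k)%N ->
  b / (k.+1)%:R * a <= b / (j.+1)%:R * a.
Proof.
move=> b0 a0 jk; apply: ler_wpM2r => //; apply: ler_wpM2l => //.
by rewrite lef_pV2 ?posrE ?ltr0n // ler_nat.
Qed.

Unset Implicit Arguments. Set Strict Implicit.

Lemma dotv0l (R : realType) (n : nat) (v : 'rV[R]_n) : dotv 0 v = 0.
Proof. by rewrite /dotv big1 // => i _; rewrite mxE mul0r. Qed.

Lemma dotvNr (R : realType) (n : nat) (u v : 'rV[R]_n) : dotv u (- v) = - dotv u v.
Proof. by rewrite dotvC dotvNl dotvC. Qed.

Theorem proposition2 (R : realType) (n : nat)
  (phi : 'rV[R]_n -> R) (g : 'rV[R]_n -> 'rV[R]_n)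
  (L : R) (ustar : 'rV[R]_n) (mu1 mu2 : R -> R) (gamma : R) :
  AssumptionA phi g L ustar mu1 mu2 ->
  0 < gamma * L < 2 ->
  ISS (fun (u e : 'rV[R]_n) => u - gamma *: (g u + e)) [set ustar].
Proof.
move=> [Hg [gc [L0 [K1 [K2 [Hiff [H1 [H2 Lip]]]]]]]] /andP[gL0 gL2].
have KI1 := classKinf_KI K1; have KI2 := classKinf_KI K2.
have g0 : 0 < gamma by move: gL0; rewrite pmulr_lgt0.
pose c := gamma * (1 - gamma * L / 2).
have c0 : 0 < c by rewrite mulr_gt0 //; lra.
pose k := gamma * L * gamma - gamma.
pose Kc := k * k / (2 * c) + gamma * L * gamma / 2.
have Kc0 : 0 < Kc.
  rewrite /Kc ltr_pwDr ?divr_gt0 ?mulr_gt0 //.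
  rewrite divr_ge0 //; last by rewrite mulr_ge0 // ltW.
  by have := sqr_ge0 k; rewrite expr2.
pose V u := phi u - phi ustar.
have gu0 : g ustar = 0 by apply/Hiff.
have Vub u : V u <= L / 2 * (enorm (u - ustar) * enorm (u - ustar)).
  have := @descent _ _ phi g L ustar (u - ustar) Hg L0 Lip.
  by rewrite gu0 dotv0l addr0 addrC subrK enorm_sq /V; lra.
have V0 u : 0 <= V u.
  by apply: le_trans (H1 u); apply: KI_ge0 KI1 _; exact: enorm_ge0.
have step u e : V (u - gamma *: (g u + e)) <=
    V u - c / 2 * dotv (g u) (g u) + Kc * dotv e e.
  have h1 := @descent _ _ phi g L u (- (gamma *: (g u + e))) Hg L0 Lip.
  have h2 := @young _ _ (g u) (k *: e) c c0.
  rewrite /V; apply: (@step_alg R gamma L (dotv (g u) (g u)) (dotv (g u) e) (dotv e e) (phi u - phi ustar) _ c k Kc) => //.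
    move: h1; rewrite dotvNr dotvNl dotvNr opprK !dotvZl !dotvZr !dotvDl !dotvDr (dotvC _ _ e (g u)).
    by move=> h; lra.
  by move: h2; rewrite !dotvZl !dotvZr !mulrA.
have c20 : 0 < c / 2 by rewrite divr_gt0.
pose rho := fun s => c / 2 * (mu2 s * mu2 s).
have Krho : KI rho := KI_scale c20 (KI_comp (KI_sq R) KI2).
have L20 : 0 < L / 2 by rewrite divr_gt0.
pose a2 := fun s : R => L / 2 * (s * s).
have Ka2 : KI a2 := KI_scale L20 (KI_sq R).
pose beta := fun (s : R) (j : nat) =>
  Kinv mu1 (2 * (Kinv rho ((2 / (j.+1)%:R) * a2 s) + (1 / (j.+1)%:R) * a2 s)).
pose alpha := fun E : R =>
  Kinv mu1 (2 * (Kinv rho (2 * (Kc * (E * E))) + Kc * (E * E))).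
have jp (j : nat) : 0 < (j.+1)%:R :> R by rewrite ltr0n.
have Kbeta (j : nat) : KI (fun s => beta s j).
  have h2 : 0 < 2 / (j.+1)%:R :> R by rewrite divr_gt0.
  have h1 : 0 < 1 / (j.+1)%:R :> R by rewrite divr_gt0.
  exact: (KI_comp (KI_Kinv KI1) (KI_scale (ltr0n _ 2) (KI_add
    (KI_comp (KI_Kinv Krho) (KI_scale h2 Ka2)) (KI_scale h1 Ka2)))).
have Kalpha : KI alpha.
  exact: (KI_comp (KI_Kinv KI1) (KI_scale (ltr0n _ 2) (KI_add
    (KI_comp (KI_Kinv Krho) (KI_scale (ltr0n _ 2) (KI_scale Kc0 (KI_sq R))))
    (KI_scale Kc0 (KI_sq R))))).
exists beta, alpha; split; [|split; first exact: KI_classKinf].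
  split; first by move=> j; case: (KI_classKinf (Kbeta j)).
  move=> s s0; have as0 : 0 <= a2 s := KI_ge0 Ka2 s0.
  have fr0 (b : R) (j : nat) : 0 <= b -> 0 <= b / (j.+1)%:R * a2 s.
    by move=> b0; rewrite mulr_ge0 // divr_ge0 // ltW.
  split.
    move=> i1 i2 i12; rewrite /beta.
    apply: Kinv_le KI1 _ _.
      rewrite mulr_ge0 // addr_ge0 ?fr0 //; apply: Kinv_ge0 Krho _; exact: fr0.
    apply: ler_wpM2l => //; apply: lerD; last exact: frac_le.
    apply: Kinv_le Krho _ _; first exact: fr0.
    exact: frac_le.
  apply/cvgrPdist_lt => eps e0.
  have m0 : 0 < mu1 eps by case: KI1 => f0 fi _ _; rewrite -f0 fi.
  pose q := mu1 eps / 4.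
  have q0 : 0 < q by rewrite divr_gt0.
  have rq0 : 0 < rho q by case: Krho => f0 fi _ _; rewrite -f0 fi.
  pose r := Num.min (rho q) q.
  have r0 : 0 < r by rewrite lt_min rq0 q0.
  exists (Num.trunc (2 * a2 s / r)) => // j /= hj.
  have hjr : 2 * a2 s / r < (j.+1)%:R.
    apply: (lt_le_trans (truncnS_gt _)); by rewrite ler_nat ltnS.
  have hX : 2 / (j.+1)%:R * a2 s < r.
    move: hjr; rewrite ltr_pdivrMr // => hjr.
    by rewrite mulrAC ltr_pdivrMr // [r * _]mulrC.
  have hr1 : r <= rho q by rewrite ge_min lexx.
  have hr2 : r <= q by rewrite ge_min lexx orbT.
  have hY : 1 / (j.+1)%:R * a2 s <= 2 / (j.+1)%:R * a2 s.
    by apply: ler_wpM2r => //; apply: ler_wpM2r; [rewrite invr_ge0 ltW|rewrite ler1n].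
  have hK : Kinv rho (2 / (j.+1)%:R * a2 s) < q.
    apply: Kinv_lt Krho _ _ _; [exact: fr0|exact: ltW|exact: lt_le_trans hX hr1].
  have hb : beta s j < eps.
    apply: Kinv_lt KI1 _ _ _; last 1 first.
    - move: hK hY hX hr2; rewrite /q.
      generalize (Kinv rho (2 / (j.+1)%:R * a2 s)) => A.
      generalize (1 / (j.+1)%:R * a2 s) => B.
      generalize (2 / (j.+1)%:R * a2 s) => C.
      lra.
    - rewrite mulr_ge0 // addr_ge0 ?fr0 //; apply: Kinv_ge0 Krho _; exact: fr0.
    - exact: ltW.
  rewrite sub0r normrN ger0_norm //.
  apply: Kinv_ge0 KI1 _.
  rewrite mulr_ge0 // addr_ge0 ?fr0 //; apply: Kinv_ge0 Krho _; exact: fr0.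
move=> e x Hb Hx j.
rewrite /dist_set !image_set1 !inf1.
set E := sup _.
have hE i : enorm (e i) <= E.
  apply: sup_upper_bound; last by exists i.
  by split => //; exists (enorm (e 0%N)); exists 0%N.
have E0 : 0 <= E := le_trans (enorm_ge0 _ _ (e 0%N)) (hE 0%N).
have hNe i : dotv (e i) (e i) <= E * E.
  by rewrite -enorm_sq; apply: le_sq => //; exact: enorm_ge0.
pose W := Kc * (E * E).
have W0 : 0 <= W by rewrite mulr_ge0 // ?mulr_ge0 // ltW.
pose y i := V (x i).
have Hy i : y i.+1 <= y i - rho (y i) + W.
  rewrite /y Hx.
  have hs := step (x i) (e i).
  have hm : mu2 (V (x i)) * mu2 (V (x i)) <= dotv (g (x i)) (g (x i)).
    rewrite -enorm_sq; apply: le_sq; first exact: KI_ge0 KI2 (V0 _).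
    exact: H2.
  have hm' := ler_wpM2l (ltW c20) hm.
  have he := ler_wpM2l (ltW Kc0) (hNe i).
  rewrite /rho /W; lra.
have hc := @compare R rho y W j Krho W0 (fun i => V0 (x i)) Hy.
set d0 := enorm (x 0%N - ustar).
have y0le : y 0%N <= a2 d0 := Vub (x 0%N).
have y00 : 0 <= y 0%N := V0 _.
have d00 : 0 <= a2 d0 := le_trans y00 y0le.
have f2 : 0 <= 2 / (j.+1)%:R :> R by rewrite divr_ge0 // ltW.
have f1 : 0 <= 1 / (j.+1)%:R :> R by rewrite divr_ge0 // ltW.
have hA : Kinv rho (2 / (j.+1)%:R * y 0%N) + 1 / (j.+1)%:R * y 0%N <=
    Kinv rho (2 / (j.+1)%:R * a2 d0) + 1 / (j.+1)%:R * a2 d0.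
  apply: lerD; last exact: ler_wpM2l.
  by apply: Kinv_le Krho _ _; [rewrite mulr_ge0 | exact: ler_wpM2l].
have A0 : 0 <= Kinv rho (2 / (j.+1)%:R * a2 d0) + 1 / (j.+1)%:R * a2 d0.
  by apply: addr_ge0; [apply: Kinv_ge0 Krho _; exact: mulr_ge0 | exact: mulr_ge0].
have B0 : 0 <= Kinv rho (2 * W) + W.
  by apply: addr_ge0 => //; apply: Kinv_ge0 Krho _; exact: mulr_ge0.
have hyj := le_trans hc (lerD hA (lexx _)).
have hd : enorm (x j - ustar) <= Kinv mu1 (y j).
  rewrite -(KI_leP KI1 (enorm_ge0 _ _ _) (Kinv_ge0 KI1 (V0 _))).
  rewrite (Kinv_spec KI1 (V0 (x j))).2; exact: H1.
apply: (le_trans hd); apply: (le_trans (Kinv_le KI1 (V0 _) hyj)).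
exact: Kinv_sum KI1 A0 B0.
Qed.
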